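(* Let $\mathcal{P}$ be a data distribution on $\mathcal{X}\times[C]$, let $D_T$ be a fixed finite test set, and fix a training point $z_i$ that is either consistently helpful or consistently harmful (as defined in the context). Let $D_N$ be a random training set of size $n$ consisting of $z_i$ together with $n-1$ points drawn i.i.d. from $\mathcal{P}$ (written $D_N\sim\mathcal{P}^{n-1}|z_i$). For $k\in\{0,\dots,n-1\}$ let $\tau_k=\mathbb{E}_{D_N\sim\mathcal{P}^{n-1}|z_i}[\Delta^{D_N}_{z_i}(k,D_T)]$ and $\delta_k=\mathrm{Var}_{D_N\sim\mathcal{P}^{n-1}|z_i}(\Delta^{D_N}_{z_i}(k,D_T))$. Then the Shapley value instance attribution $g^{\mathrm{Shap}}$ is $\beta^{\mathrm{Shap}}$-robust and the leave-one-out instance attribution $g^{\mathrm{LOO}}$ is $\beta^{\mathrm{LOO}}$-robust for $z_i$, where $$\beta^{\mathrm{Shap}}\le \frac{n^{-1}\sum_{k=0}^{n-1}\delta_k}{\left(n^{-1}\sum_{k=0}^{n-1}\tau_k\right)^2}\qquad\text{and}\qquad \beta^{\mathrm{LOO}}\le\frac{\delta_{n-1}}{\tau_{n-1}^2}.$$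
   Context: Training set $D_N=\{z_j=(x_j,y_j)\}_{j\in N}$, $N=\{1,\dots,n\}$; test set $D_T$. For $S\subseteq N$, $f_S$ denotes the classifier obtained by training (by a fixed procedure) on $D_S=\{z_j:j\in S\}$, and the utility is the test accuracy $U(S,D_T)=\frac{1}{|D_T|}\sum_{(x_t,y_t)\in D_T}\mathbf{1}[f_S(x_t)=y_t]$. The marginal contribution of $z_i$ to subsets of size $k$ is $\Delta^{D_N}_{z_i}(k,D_T)=\binom{n-1}{k}^{-1}\sum_{S\subseteq N\setminus\{i\},\,|S|=k}\big(U(S\cup\{i\},D_T)-U(S,D_T)\big)$. LOO score: $g^{\mathrm{LOO}}(z_i,D_T,D_N)=\Delta^{D_N}_{z_i}(n-1,D_T)$. Shapley score: $g^{\mathrm{Shap}}(z_i,D_T,D_N)=n^{-1}\sum_{k=0}^{n-1}\Delta^{D_N}_{z_i}(k,D_T)$. $z_i$ is consistently helpful if $\tau_k\ge 0$ for all $k\in\{0,\dots,n-1\}$, and consistently harmful if $\tau_k<0$ for all such $k$. Define $\mathrm{sgn}(x)=-1$ if $x<0$ and $\mathrm{sgn}(x)=1$ if $x\ge 0$; set $\mathrm{sgn}^*(z_i)=1$ if $z_i$ is consistently helpful and $\mathrm{sgn}^*(z_i)=-1$ if consistently harmful. An attribution function $g$ is $\beta$-robust for $z_i$ if $\mathbb{P}_{D_N\sim\mathcal{P}^{n-1}|z_i}\big(\mathrm{sgn}(g(z_i,D_T,D_N))\neq\mathrm{sgn}^*(z_i)\big)=\beta$. *)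

(* Defs.v *)
From HB Require Import structures.
From mathcomp Require Import all_boot all_order all_algebra.
From mathcomp Require Import all_classical all_reals all_analysis.

Set Implicit Arguments.
Unset Strict Implicit.
Unset Printing Implicit Defensive.

Import Order.TTheory GRing.Theory Num.Theory.

Local Open Scope classical_set_scope.
Local Open Scope ring_scope.

(* The label set [C] = {0,...,C}: we write the number of classes as C.+1
   (it is >= 1 since the fixed training point z_i carries a label).
   It is given the discrete sigma-algebra. *)
Definition label (C : nat) : Type := 'I_C.+1.
HB.instance Definition _ C := Choice.on (label C).
HB.instance Definition _ C := isPointed.Build (label C) (@ord0 C).
HB.instance Definition _ C := @isMeasurable.Build default_measure_display
  (label C) discrete_measurable discrete_measurable0
  discrete_measurableC discrete_measurableU.

Section attribution.
Variables (R : realType) (T X L : Type).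

Definition train (n : nat) (S : {set 'I_n}) (z : 'I_n -> T) : seq T :=
  [seq z j | j <- enum S].

Definition utility (learn : seq T -> X -> L) (eqL : L -> L -> bool)
  (DT : seq (X * L)) (n : nat) (S : {set 'I_n}) (z : 'I_n -> T) : R :=
  (\sum_(t <- DT) (eqL (learn (train S z) t.1) t.2)%:R) / (size DT)%:R.

End attribution.

Section attribution2.
Variables (R : realType) (X : Type) (C : nat).
Local Notation T := (X * label C)%type.
Variables (learn : seq T -> X -> label C) (DT : seq T) (n : nat) (i : 'I_n).

Definition U (S : {set 'I_n}) (z : 'I_n -> T) : R :=
  @utility R T X (label C) learn (fun a b : label C => a == b) DT n S z.

Definition marginal (k : nat) (z : 'I_n -> T) : R :=
  ('C(n.-1, k)%:R)^-1 *
  \sum_(S : {set 'I_n} | (i \notin S) && (#|S| == k))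
     (U (i |: S) z - U S z).

Definition g_LOO (z : 'I_n -> T) : R := marginal n.-1 z.

Definition g_Shap (z : 'I_n -> T) : R :=
  (n%:R)^-1 * \sum_(k < n) marginal k z.

End attribution2.

Definition sgn (R : realType) (x : R) : R := if x < 0 then -1 else 1.

Section random.
Local Open Scope ereal_scope.
Variables (R : realType) (dX : measure_display) (X : measurableType dX)
  (C : nat) (dO : measure_display) (Omega : measurableType dO)
  (Pr : probability Omega R).
Local Notation T := (X * label C)%type.
Variables (learn : seq T -> X -> label C) (DT : seq T) (n : nat) (i : 'I_n)
  (Z : 'I_n -> Omega -> T).

Definition DN (w : Omega) : 'I_n -> T := fun j => Z j w.

Definition tau (k : nat) : \bar R :=
  'E_Pr[fun w => marginal R learn DT i k (DN w)].
Definition delta (k : nat) : \bar R :=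
  'V_Pr[fun w => marginal R learn DT i k (DN w)].

Definition consistently_helpful : Prop := forall k, (k < n)%N -> 0 <= tau k.
Definition consistently_harmful : Prop := forall k, (k < n)%N -> tau k < 0.

Definition is_sgn_star (s : R) : Prop :=
  (consistently_helpful /\ s = 1%R) \/ (consistently_harmful /\ s = (-1)%R).

Definition beta_robust (g : ('I_n -> T) -> R) (s beta : R) : Prop :=
  Pr [set w | sgn (g (DN w)) != s] = beta%:E.

End random.

(* D_N ~ P^{n-1} | z_i : Z_i is the constant z_i and the Z_j (j <> i) are
   mutually independent random points with law P. *)
Definition iid_given (R : realType) (dT : measure_display)
  (T : measurableType dT) (P : probability T R) (dO : measure_display)
  (Omega : measurableType dO) (Pr : probability Omega R) (n : nat) (i : 'I_n)
  (zi : T) (Z : 'I_n -> Omega -> T) : Prop :=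
  [/\ (forall w, Z i w = zi),
      (forall j, j != i -> measurable_fun setT (Z j)),
      (forall j, j != i -> forall A, measurable A ->
          Pr (Z j @^-1` A) = P A) &
      (forall A : 'I_n -> set T, (forall j, measurable (A j)) ->
          Pr (\bigcap_(j in [set j | j != i]) (Z j @^-1` A j)) =
          (\prod_(j < n | j != i) Pr (Z j @^-1` A j))%E)].

Notation data X C := (X * label C)%type.

(* Main.v *)
Require Import Defs.
From HB Require Import structures.
From mathcomp Require Import all_boot all_order all_algebra.
From mathcomp Require Import all_classical all_reals all_analysis.
From mathcomp Require Import ring lra measurable_realfun measurable_fun_approximation.
Import numFieldNormedType.Exports.
Import Order.TTheory GRing.Theory Num.Theory.
Local Open Scope classical_set_scope.
Local Open Scope ring_scope.

Lemma measurable_sum_pred d (T : measurableType d) (R : realType) (I : Type)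
  (s : seq I) (P : pred I) (h : I -> T -> R) :
  (forall i, measurable_fun setT (h i)) ->
  measurable_fun setT (fun x => \sum_(i <- s | P i) h i x).
Proof.
move=> mh.
rewrite (_ : (fun x => _) = fun x => \sum_(i <- s) (if P i then h i x else 0)).
  apply: measurable_sum => j; case: (P j) => //; exact: measurable_cst.
by apply/funext => x; rewrite big_mkcond.
Qed.

Lemma U_bound (R : realType) (X : Type) (C : nat) (learn : seq (X * label C) -> X -> label C)
  (DT : seq (X * label C)) (n : nat) S z :
  0 <= @U R X C learn DT n S z <= 1.
Proof.
rewrite /U /utility.
have [->|sz] := eqVneq (size DT) 0%N; first by rewrite invr0 mulr0 lexx ler01.
have s0 : (0 < (size DT)%:R :> R) by rewrite ltr0n lt0n.
apply/andP; split.
  by apply: divr_ge0 => //; apply: sumr_ge0 => t _.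
rewrite ler_pdivrMr // mul1r -natr_sum ler_nat.
rewrite -sum1_size; apply: leq_sum => t _; by case: (_ == _).
Qed.
Lemma markov_gen d (T : measurableType d) (R : realType) (P : probability T R)
  (A : set T) (h : T -> R) (c : R) : measurable A -> measurable_fun setT h ->
  (forall w, 0 <= h w) -> 0 < c -> (forall w, A w -> c <= h w) ->
  (c%:E * P A <= \int[P]_w (h w)%:E)%E.
Proof.
move=> mA mh h0 c0 hA.
rewrite -[A]setIT -integral_indic // -ge0_integralZl_EFin //; last 2 first.
- exact/measurable_EFinP/measurable_indic.
- exact: ltW.
under eq_integral do rewrite -EFinM.
apply: ge0_le_integral => //.
- move=> x _; rewrite lee_fin; apply: mulr_ge0; first exact: ltW.
  by rewrite indicE; case: (_ \in _).
- apply/measurable_EFinP; apply: measurable_funM => //.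
- exact/measurable_EFinP.
move=> x _; rewrite lee_fin indicE.
have [Ax|nAx] := pselect (A x).
  by rewrite mem_set // mulr1 hA.
by rewrite memNset // mulr0 h0.
Qed.

Lemma generic_bound d (T : measurableType d) (R : realType) (P : probability T R)
  (g H : T -> R) (mu s : R) :
  measurable_fun setT g -> measurable_fun setT H -> (forall w, 0 <= H w) ->
  (forall w, (g w - mu) ^+ 2 <= H w) ->
  ((s = 1 /\ 0 <= mu) \/ (s = -1 /\ mu < 0)) ->
  exists beta : R, P [set w | sgn (g w) != s] = beta%:E /\
    (beta%:E <= (\int[P]_w (H w)%:E) / (mu%:E * mu%:E))%E.
Proof.
move=> mg mH H0 gH hs.
set A := [set w | sgn (g w) != s].
have mA : measurable A.
  rewrite /A; case: hs => [[-> _]|[-> _]].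
  - rewrite (_ : [set w | _] = g @^-1` `]-oo, 0[).
      by rewrite -[X in measurable X]setTI; apply: mg => //.
    apply/seteqP; split => w /=; rewrite /sgn in_itv /=; case: ifPn => //.
    + by rewrite eqxx.
    + by move=> _ _; apply/negP => /eqP; lra.
  - rewrite (_ : [set w | _] = g @^-1` `[0, +oo[).
      by rewrite -[X in measurable X]setTI; apply: mg => //.
    apply/seteqP; split => w /=; rewrite /sgn in_itv /= andbT; case: ifPn => //.
    + by rewrite eqxx.
    + by rewrite -leNgt.
    + by rewrite leNgt => ->.
    + by move=> _ _; apply/negP => /eqP; lra.
have PAfin : P A \is a fin_num.
  by rewrite ge0_fin_numE ?measure_ge0 // (le_lt_trans (probability_le1 P mA)) ?ltey.
exists (fine (P A)); split; first by rewrite fineK.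
rewrite fineK //.
set V := (\int[P]_w (H w)%:E)%E.
have V0 : (0 <= V)%E by apply: integral_ge0 => w _; rewrite lee_fin.
have key := @markov_gen _ _ _ P _ _ _ mA mH H0.
have Acond : forall w, A w -> mu ^+ 2 <= H w.
  move=> w Aw; apply: (le_trans _ (gH w)); move: Aw; rewrite /A /sgn /=.
  case: hs => [[-> mu0]|[-> mu0]]; case: ifPn => gw /eqP; try lra.
  - move=> _; nra.
  - move=> _; rewrite -leNgt in gw; nra.
have [mu00|mu0] := eqVneq mu 0; last first.
  have m2 : 0 < mu ^+ 2 by rewrite exprn_even_gt0.
  have k := key _ m2 Acond.
  rewrite -EFinM inver mulf_eq0 orbb (negbTE mu0) lee_pdivlMr; last by rewrite -expr2.
  by rewrite muleC -expr2.
subst mu; rewrite mule0 inver eqxx.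
have [V0'|Vpos] := eqVneq V 0%E; last first.
  by rewrite muleC gt0_mulye ?leey // lt0e Vpos V0.
rewrite V0' mul0e.
have hs1 : s = 1 by case: hs => [[->]|[_]] //; rewrite ltxx.

have : (\int[P]_(x in setT) `|(H x)%:E| = 0)%E.
  by rewrite -V0'; apply: eq_integral => x _; rewrite gee0_abs // lee_fin.
move/(ae_eq_integral_abs P measurableT (proj2 (measurable_EFinP _ _) mH)).
case=> N [mN PN0 sub].
rewrite -PN0 le_measure ?inE //.
move=> w Aw; apply: sub => /= /(_ I) /eqP; rewrite eqe => /eqP Hw0.
move: Aw (gH w); rewrite /A /sgn /= hs1 Hw0 subr0; case: ifPn => gw /eqP; try lra.
move=> _; nra.
Qed.
Lemma sq_avg (R : realFieldType) n (a : 'I_n -> R) : (0 < n)%N ->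
  (n%:R^-1 * \sum_(k < n) a k) ^+ 2 <= n%:R^-1 * \sum_(k < n) a k ^+ 2.
Proof.
move=> n0; set b := n%:R^-1 * \sum_(k < n) a k.
have nR : (0 < n%:R :> R) by rewrite ltr0n.
have e : \sum_(k < n) a k = n%:R * b by rewrite /b mulrA mulfV ?mul1r // gt_eqF.
have h : 0 <= \sum_(k < n) (a k - b) ^+ 2.
  by apply: sumr_ge0 => k _; exact: sqr_ge0.
have e2 : \sum_(k < n) (a k - b) ^+ 2 = \sum_(k < n) a k ^+ 2 - n%:R * b ^+ 2.
  under eq_bigr do rewrite sqrrB.
  rewrite big_split /= big_split /= sumrN sumrMnl -mulr_suml sumr_const card_ord e.
  rewrite mulr2n -[b ^+ 2 *+ n]mulr_natl; ring.
rewrite e2 subr_ge0 in h.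
by rewrite ler_pdivlMl.
Qed.

Theorem theorem3p4 (R : realType) (dX : measure_display) (X : measurableType dX)
  (C : nat) (P : probability (data X C) R)
  (DT : seq (data X C)) (learn : seq (data X C) -> X -> label C)
  (n : nat) (i : 'I_n) (zi : data X C)
  (dO : measure_display) (Omega : measurableType dO) (Pr : probability Omega R)
  (Z : 'I_n -> Omega -> data X C)
  (HZ : iid_given P Pr i zi Z)
  (Hlearn : forall (S : {set 'I_n}) (t : data X C),
      measurable [set w | learn (train S (DN Z w)) t.1 == t.2])
  (s : R) (Hs : is_sgn_star Pr learn DT i Z s) :
  (exists betaShap : R,
     beta_robust Pr Z (g_Shap R learn DT i) s betaShap /\
     (betaShap%:E <=
        ((n%:R^-1)%:E * \sum_(k < n) delta Pr learn DT i Z k) /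
        (((n%:R^-1)%:E * \sum_(k < n) tau Pr learn DT i Z k) *
         ((n%:R^-1)%:E * \sum_(k < n) tau Pr learn DT i Z k)))%E) /\
  (exists betaLOO : R,
     beta_robust Pr Z (g_LOO R learn DT i) s betaLOO /\
     (betaLOO%:E <=
        delta Pr learn DT i Z n.-1 /
        (tau Pr learn DT i Z n.-1 * tau Pr learn DT i Z n.-1))%E).
Proof.
have n0 : (0 < n)%N by case: n i {Z HZ Hlearn Hs} => -[].
have mU : forall S, measurable_fun setT (fun w => @U R X C learn DT n S (DN Z w)).
  move=> S; rewrite /U /utility.
  apply: measurable_funM; last exact: measurable_cst.

  apply: measurable_sum => t.
  rewrite (_ : (fun w => _) = \1_[set w | learn (train S (DN Z w)) t.1 == t.2]).
    exact: measurable_indic.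
  apply/funext => w; rewrite /indic; case: (boolP (_ == _)) => h.
    by rewrite mem_set.
  by rewrite memNset //=; exact/negP.
set f := fun k w => marginal R learn DT i k (DN Z w).
have mf : forall k, measurable_fun setT (f k).
  move=> k; rewrite /f /marginal; apply: measurable_funM; first exact: measurable_cst.
  apply: measurable_sum_pred => S; apply: measurable_funB; exact: mU.
have bf : forall k, exists M, forall w, `|f k w| <= M.
  move=> k; exists (`|('C(n.-1, k)%:R : R)^-1| *
    \sum_(S : {set 'I_n} | (i \notin S) && (#|S| == k)) (1 : R)).
  move=> w; rewrite /f /marginal normrM ler_wpM2l //.
  apply: le_trans (ler_norm_sum _ _ _) _; apply: ler_sum => S _.
  have := @U_bound R X C learn DT n (i |: S) (DN Z w).
  have := @U_bound R X C learn DT n S (DN Z w).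
  move=> /andP[h1 h2] /andP[h3 h4]; rewrite ler_norml; apply/andP; split; lra.
have intf : forall k, Pr.-integrable setT (EFin \o f k).
  move=> k; have [M hM] := bf k.
  apply: (@le_integrable _ _ _ _ _ measurableT _ (EFin \o cst M)).
  - exact/measurable_EFinP.
  - move=> w _ /=; rewrite lee_fin; apply: le_trans (hM w) _; exact: ler_norm.
  - exact: finite_measure_integrable_cst.
have taufin : forall k, tau Pr learn DT i Z k \is a fin_num.
  move=> k; rewrite /tau expectation.unlock; apply: integrable_fin_num.
  by []. exact: intf.
set m := fun k => fine (tau Pr learn DT i Z k).
have taum : forall k, tau Pr learn DT i Z k = (m k)%:E by move=> k; rewrite fineK.
have deltaE : forall k, delta Pr learn DT i Z k = (\int[Pr]_w ((f k w - m k) ^+ 2)%:E)%E.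
  move=> k; rewrite /delta /variance covariance.unlock /m /tau expectation.unlock.
  by apply: eq_integral => w _; rewrite /= expr2.
have mF : forall k, measurable_fun setT (fun w => (f k w - m k) ^+ 2).
  by move=> k; apply: measurable_funX; apply: measurable_funB => //; exact: measurable_cst.
have mFE : forall k, measurable_fun setT (fun w => ((f k w - m k) ^+ 2)%:E).
  by move=> k; apply/measurable_EFinP; exact: mF.
split.
- set g := fun w => g_Shap R learn DT i (DN Z w).
  set mu := n%:R^-1 * \sum_(k < n) m k.
  set Hh := fun w => n%:R^-1 * \sum_(k < n) (f k w - m k) ^+ 2.
  have mg : measurable_fun setT g.
    rewrite /g /g_Shap; apply: measurable_funM; first exact: measurable_cst.
    by apply: measurable_sum => k; exact: mf.
  have mH : measurable_fun setT Hh.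
    rewrite /Hh; apply: measurable_funM; first exact: measurable_cst.
    by apply: measurable_sum => k; exact: mF.
  have H0 : forall w, 0 <= Hh w.
    move=> w; apply: mulr_ge0; first by rewrite invr_ge0.
    by apply: sumr_ge0 => k _; exact: sqr_ge0.
  have gH : forall w, (g w - mu) ^+ 2 <= Hh w.
    by move=> w; rewrite /g /g_Shap /mu -mulrBr -sumrB; exact: sq_avg.
  have hs : (s = 1 /\ 0 <= mu) \/ (s = -1 /\ mu < 0).
    case: Hs => [[hh ->]|[hh ->]]; [left|right]; split => //.
      apply: mulr_ge0; first by rewrite invr_ge0.
      by apply: sumr_ge0 => k _; rewrite /m fine_ge0 // hh.
    rewrite /mu pmulr_rlt0 ?invr_gt0 ?ltr0n //.
    have mlt : forall k, (k < n)%N -> m k < 0.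
      by move=> k kn; rewrite -lte_fin -taum hh.
    move: mlt n0; case: (n) => // n' mlt _.
    rewrite big_ord_recl.
    have h1 := mlt 0%N isT.
    have h2 : \sum_(k < n') m (bump 0 k) <= 0.
      by apply: sumr_le0 => k _; apply: ltW; apply: mlt; rewrite /bump /= ltnS.
    simpl in h1; lra.
  have [beta [hb1 hb2]] := @generic_bound _ _ _ Pr _ _ _ _ mg mH H0 gH hs.
  exists beta; split; first exact: hb1.
  have -> : ((n%:R^-1)%:E * \sum_(k < n) tau Pr learn DT i Z k = mu%:E)%E.
    by rewrite /mu EFinM -sumEFin; congr (_ * _)%E; apply: eq_bigr => k _.
  suff -> : ((n%:R^-1)%:E * \sum_(k < n) delta Pr learn DT i Z k =
             \int[Pr]_w (Hh w)%:E)%E by [].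
  rewrite /Hh.
  under eq_integral do rewrite EFinM -sumEFin.
  rewrite ge0_integralZl_EFin //; [| by move=> w _; apply: sume_ge0 => k _; rewrite lee_fin sqr_ge0
    | by apply: emeasurable_sum => k; exact: mFE].
  rewrite ge0_integral_sum //; last by move=> k w _; rewrite lee_fin sqr_ge0.
  by congr (_ * _)%E; apply: eq_bigr => k _; rewrite deltaE.
- set g := fun w => g_LOO R learn DT i (DN Z w).
  set mu := m n.-1.
  set Hh := fun w => (f n.-1 w - m n.-1) ^+ 2.
  have mg : measurable_fun setT g by exact: mf.
  have H0 : forall w, 0 <= Hh w by move=> w; exact: sqr_ge0.
  have gH : forall w, (g w - mu) ^+ 2 <= Hh w by move=> w; exact: lexx.
  have nn : (n.-1 < n)%N by rewrite prednK.
  have hs : (s = 1 /\ 0 <= mu) \/ (s = -1 /\ mu < 0).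
    case: Hs => [[hh ->]|[hh ->]]; [left|right]; split => //.
      by rewrite /mu /m fine_ge0 // hh.
    by rewrite /mu -lte_fin -taum hh.
  have [beta [hb1 hb2]] := @generic_bound _ _ _ Pr _ _ _ _ mg (mF n.-1) H0 gH hs.
  exists beta; split; first exact: hb1.
  by rewrite taum deltaE.
Qed.
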